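(* Let $\lambda_1>\lambda_0>0$, $a,b>0$ with $\lambda_1-\lambda_0>\frac1a+\frac1b$, and let $0<\alpha^*<b/a<\beta^*$ be the optimal stopping boundaries described in the context. Let $f_0$ be the (unique continuous) solution of $$(\lambda_0-\lambda_1)\varphi f_0'(\varphi)+\lambda_0[f_0(\lambda_1\varphi/\lambda_0)-f_0(\varphi)]=0\ \text{ for }\varphi\in(\alpha^*/\beta^*,1),\qquad f_0(1)=1,\quad f_0(\varphi)=0\ \text{for }\varphi>1,$$ and let $f_1$ be the (unique continuous) solution of $$(\lambda_0-\lambda_1)\varphi f_1'(\varphi)+\lambda_0[f_1(\lambda_1\varphi/\lambda_0)-f_1(\varphi)]+(\varphi-1)=0\ \text{ for }\varphi\in(\alpha^*/\beta^*,1),\qquad f_1(1)=0,\quad f_1(\varphi)=-b\ \text{for }\varphi>1.$$ Then $f_0$ and $f_1$ are strictly decreasing on $[\alpha^*/\beta^*,1]$.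
   Context: Setting: $X$ is a Poisson process with $X_0=0$ which under $\mathsf P_0$ ($\mathsf E_0$ its expectation) has intensity $\lambda_0$; $L_t=\exp\{X_t\log(\lambda_1/\lambda_0)-(\lambda_1-\lambda_0)t\}$; $\mathbb S$ is the set of stopping times of the natural filtration of $X$. For $\psi>0$ and $\tau\in\mathbb S$, $\bar J(\psi;\tau)=\frac{1}{1+\psi}\mathsf E_0\big[\int_0^\tau(1+\psi L_t)\,dt+(a\psi L_\tau)\wedge b\big]$. When $\lambda_1-\lambda_0>1/a+1/b$ there exist unique constants $0<\alpha^*<b/a<\beta^*$ (independent of $\psi$) such that for every $\psi>0$ the stopping time $\inf\{t\ge0:\psi L_t\notin(\alpha^*,\beta^* )\}$ minimizes $\bar J(\psi;\cdot)$ over $\mathbb S$. *)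

(* Defs.v *)
From HB Require Import structures.
From mathcomp Require Import all_boot all_order all_algebra.
From mathcomp Require Import all_classical all_reals all_analysis.
Set Implicit Arguments. Unset Strict Implicit. Unset Printing Implicit Defensive.
Import Order.TTheory GRing.Theory Num.Theory.
Import numFieldNormedType.Exports.
Local Open Scope classical_set_scope.
Local Open Scope ring_scope.

Section Defs.
Context {R : realType} {d : measure_display} {Omega : measurableType d}.

Definition poisson_pmf (mu : R) (k : nat) : R :=
  expR (- mu) * mu ^+ k / (k`!)%:R.

Definition is_poisson_process (P : probability Omega R) (lam : R)
    (X : R -> Omega -> R) : Prop :=
  (forall w, X 0 w = 0) /\
  (forall t, measurable_fun setT (X t)) /\
  [/\ 
forall w t, 0 <= t -> exists k : nat, X t w = k%:R,
      forall w s t, 0 <= s -> s <= t -> X s w <= X t w,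
      forall w t, 0 <= t -> (fun s => X s w) @ t^'+ --> X t w &
      forall (n : nat) (t : nat -> R) (k : nat -> nat),
        0 <= t 0%N -> (forall i, (i < n)%N -> t i <= t i.+1) ->
        P (\bigcap_(i in [set i | (i < n)%N])
             [set w | X (t i.+1) w - X (t i) w = (k i)%:R])
        = (\prod_(i < n) poisson_pmf (lam * (t i.+1 - t i)) (k i))%:E].

Definition nat_filtration (X : R -> Omega -> R) (t : R) : set (set Omega) :=
  <<s [set A | exists s (B : set R),
          [/\ 0 <= s, s <= t, measurable B & A = X s @^-1` B]] >>.

Definition is_stopping_time (X : R -> Omega -> R) (tau : Omega -> \bar R) : Prop :=
  (forall w, (0 <= tau w)%E) /\
  (forall t, 0 <= t -> nat_filtration X t [set w | (tau w <= t%:E)%E]).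

Definition lik (l0 l1 : R) (X : R -> Omega -> R) (t : R) (w : Omega) : R :=
  expR (X t w * ln (l1 / l0) - (l1 - l0) * t).

(* terminal cost (a psi L_tau) /\ b; on {tau = +oo} (a null set whenever the
   cost is finite) it is set to b *)
Definition terminal_cost (l0 l1 a b psi : R) (X : R -> Omega -> R)
    (tau : Omega -> \bar R) (w : Omega) : \bar R :=
  match tau w with
  | EFin r => (Num.min (a * psi * lik l0 l1 X r w) b)%:E
  | _ => b%:E
  end.

Definition Jbar (P : probability Omega R) (l0 l1 a b : R) (X : R -> Omega -> R)
    (psi : R) (tau : Omega -> \bar R) : \bar R :=
  ((1 + psi)^-1)%:E *
  (\int[P]_w
     ((\int[lebesgue_measure]_(t in [set t : R | (0 <= t)%R /\ (t%:E < tau w)%E])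
         (1 + psi * lik l0 l1 X t w)%R%:E)
      + terminal_cost l0 l1 a b psi X tau w))%E.

Definition exit_time (l0 l1 psi alpha beta : R) (X : R -> Omega -> R)
    (w : Omega) : \bar R :=
  ereal_inf [set t%:E | t in [set t : R | 0 <= t /\
                 ~ (alpha < psi * lik l0 l1 X t w < beta)]].

Definition optimal_boundaries (P : probability Omega R) (l0 l1 a b : R)
    (X : R -> Omega -> R) (alpha beta : R) : Prop :=
  forall psi, 0 < psi ->
    is_stopping_time X (exit_time l0 l1 psi alpha beta X) /\
    forall tau, is_stopping_time X tau ->
      (Jbar P l0 l1 a b X psi (exit_time l0 l1 psi alpha beta X)
       <= Jbar P l0 l1 a b X psi tau)%E.

End Defs.

(* Main.v *)
Require Import Defs.
From HB Require Import structures.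
From mathcomp Require Import all_boot all_order all_algebra.
From mathcomp Require Import all_classical all_reals all_analysis.
From mathcomp Require Import lra.
Import Order.TTheory GRing.Theory Num.Theory.
Import numFieldNormedType.Exports.
Local Open Scope classical_set_scope.
Local Open Scope ring_scope.

Lemma cont_eps (R : realType) (c d : R) (f : R -> R) :
  {within `[c,d], continuous f} -> forall x, c <= x -> x <= d ->
  forall e, 0 < e -> exists2 del, 0 < del &
    forall y, c <= y -> y <= d -> `|y - x| < del -> `|f y - f x| < e.
Proof.
move=> /subspace_continuousP cf x cx xd e e0.
have Ax : [set` `[c, d]] x by rewrite /= in_itv /= cx xd.
have /cvgrPdist_lt/(_ e e0) := cf x Ax.
rewrite /within /= => /nbhs_ballP [del del0 Hb].
exists del => // y cy yd yx.
have := Hb y; rewrite /ball /= distrC => /(_ yx).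
by rewrite distrC; apply; rewrite in_itv /= cy yd.
Qed.

Arguments cont_eps {R c d f}.

Lemma decr_from (R : realType) (s c : R) (f : R -> R) :
  c <= s -> s < 1 ->
  {within `[c,1], continuous f} ->
  (forall p, s < p -> p < 1 -> derivable f p 1 /\ derive1 f p < 0) ->
  forall x y, s <= x -> x < y -> y <= 1 -> f y < f x.
Proof.
move=> cs s1 cf H x y sx xy y1.
apply: (@ltr0_derive1_lt_cc _ f s 1).
- by move=> p; rewrite in_itv /= => /andP[a b]; case: (H p a b).
- by move=> p; rewrite in_itv /= => /andP[a b]; case: (H p a b).
- by apply: continuous_subspaceW cf; apply: subset_itvr; rewrite bnd_simp.
- by rewrite in_itv /= y1 andbT; lra.
- by rewrite in_itv /= sx /=; lra.
- exact: xy.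
Qed.

Lemma key (R : realType) (c r v w : R) (f : R -> R) :
  0 < c -> c < 1 -> 1 < r -> w < v ->
  {within `[c,1], continuous f} -> f 1 = v -> (forall p, 1 < p -> f p = w) ->
  (forall p, c < p -> p < 1 -> derivable f p 1) ->
  (forall p, c < p -> p < 1 -> f (r * p) < f p -> derive1 f p < 0) ->
  forall x y, c <= x -> x < y -> y <= 1 -> f y < f x.
Proof.
move=> c0 c1 r1 wv cf f1 fw df dneg.
have A : forall s, c <= s -> s < 1 ->
    (forall p, s < p -> p < 1 -> f (r * p) < f p) ->
    forall x y, s <= x -> x < y -> y <= 1 -> f y < f x.
  move=> s cs s1 H; apply: (@decr_from R s c f cs s1 cf) => p sp p1.
  have cp : c < p by lra.
  by split; [exact: df | apply: dneg => //; exact: H].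
suff G : forall p, c < p -> p < 1 -> f (r * p) < f p.
  by apply: (A c) => //; lra.
move=> p cp p1; rewrite ltNge; apply/negP => Hbad.
pose B := [set q | c < q /\ q < 1 /\ f q <= f (r * q)].
have Bp : B p by [].
have hB : has_sup B.
  split; first by exists p.
  by exists 1 => q [_ [q1 _]]; exact: ltW.
set s := sup B.
have ps : p <= s by exact: sup_upper_bound.
have s1 : s <= 1.
  by apply: ge_sup; [exists p | move=> q [_ [q1 _]]; exact: ltW].
have Hgood : forall q, s < q -> q < 1 -> f (r * q) < f q.
  move=> q sq q1; rewrite ltNge; apply/negP => bq.
  have : q <= s by apply: sup_upper_bound => //; split; [lra|split].
  lra.
have cs : c <= s by lra.
have fsv : v <= f s /\ (s < 1 -> v < f s).
  have [s1'|] := ltP s 1.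
    have := A s cs s1' Hgood s 1 (lexx _) s1' (lexx _); rewrite f1 => h.
    by split; [exact: ltW | ].
  move=> s1''; have -> : s = 1 by lra.
  by rewrite f1; split => //; lra.
have [del del0 Hdel] : exists2 del, 0 < del &
    forall q, c <= q -> q <= s -> s - del < q -> f (r * q) < f q.
  have [rs1|rs1] := leP (r * s) 1.
  - have rsc : c <= r * s by nra.
    have frs : f (r * s) < f s.
      have [rs1'|rs1'] := ltP (r * s) 1.
        have s1' : s < 1 by nra.
        apply: (A s cs s1' Hgood) => //; nra.
      have -> : r * s = 1 by lra.
      rewrite f1; apply: fsv.2; nra.
    pose e1 := (f s - f (r * s)) / 2.
    have e10 : 0 < e1 by rewrite /e1; lra.
    have [d1 d10 H1] := cont_eps cf s cs s1 _ e10.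
    have [d2 d20 H2] := cont_eps cf _ rsc rs1 _ e10.
    have r0 : 0 < r by lra.
    exists (Num.min d1 (d2 / r)); first by rewrite lt_min d10 /= divr_gt0.
    move=> q cq qs sq.
    have : s - q < Num.min d1 (d2 / r) by lra.
    rewrite lt_min => /andP[q1 q2].
    rewrite ltr_pdivlMr // in q2.
    have : `|q - s| < d1 by rewrite ler0_norm; lra.
    move=> /(H1 q cq (le_trans qs s1)); rewrite ltr_norml => /andP[h1a h1b].
    have rqc : c <= r * q by nra.
    have rq1 : r * q <= 1 by nra.
    have : `|r * q - r * s| < d2 by rewrite ler0_norm; nra.
    move=> /(H2 _ rqc rq1); rewrite ltr_norml => /andP[h2a h2b].
    rewrite /e1 in h1a h1b h2a h2b; lra.
  - have r0 : 0 < r by lra.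
    have ri : r * r^-1 = 1 by rewrite mulfV // gt_eqF.
    pose e1 := (f s - w) / 2.
    have e10 : 0 < e1 by rewrite /e1; lra.
    have [d1 d10 H1] := cont_eps cf s cs s1 _ e10.
    have sr : r^-1 < s by nra.
    exists (Num.min (s - r^-1) d1); first by rewrite lt_min d10 andbT subr_gt0.
    move=> q cq qs sq.
    have : s - q < Num.min (s - r^-1) d1 by lra.
    rewrite lt_min => /andP[q1 q2].
    rewrite fw; last by nra.
    have : `|q - s| < d1 by rewrite ler0_norm; lra.
    move=> /(H1 q cq (le_trans qs s1)); rewrite ltr_norml => /andP[h1a h1b].
    rewrite /e1 in h1a h1b; lra.
have [e [ce [e1 Be]] se] := sup_adherent del0 hB.
have es : e <= s by apply: sup_upper_bound.
have := Hdel e (ltW ce) es se; lra.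
Qed.

Theorem lemma3p3 (R : realType) (l0 l1 a b : R)
    (d : measure_display) (Omega : measurableType d)
    (P : probability Omega R) (X : R -> Omega -> R)
    (alpha beta : R) (f0 f1 : R -> R) :
  0 < l0 -> l0 < l1 -> 0 < a -> 0 < b -> a^-1 + b^-1 < l1 - l0 ->
  is_poisson_process P l0 X ->
  0 < alpha -> alpha < b / a -> b / a < beta ->
  optimal_boundaries P l0 l1 a b X alpha beta ->
  {within `[alpha / beta, 1], continuous f0} ->
  (forall phi, alpha / beta < phi < 1 ->
     derivable f0 phi 1 /\
     (l0 - l1) * phi * derive1 f0 phi + l0 * (f0 (l1 * phi / l0) - f0 phi) = 0) ->
  f0 1 = 1 -> (forall phi, 1 < phi -> f0 phi = 0) ->
  {within `[alpha / beta, 1], continuous f1} ->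
  (forall phi, alpha / beta < phi < 1 ->
     derivable f1 phi 1 /\
     (l0 - l1) * phi * derive1 f1 phi + l0 * (f1 (l1 * phi / l0) - f1 phi)
       + (phi - 1) = 0) ->
  f1 1 = 0 -> (forall phi, 1 < phi -> f1 phi = - b) ->
  (forall x y, alpha / beta <= x -> x < y -> y <= 1 -> f0 y < f0 x) /\
  (forall x y, alpha / beta <= x -> x < y -> y <= 1 -> f1 y < f1 x).
Proof.
move=> l00 l01 a0 b0 _ _ al0 alba bab _ cf0 ode0 f01 f0g cf1 ode1 f11 f1g.
have ba0 : 0 < b / a by rewrite divr_gt0.
have be0 : 0 < beta by lra.
have c0 : 0 < alpha / beta by rewrite divr_gt0.
have c1 : alpha / beta < 1 by rewrite ltr_pdivrMr // mul1r; lra.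
have r1 : 1 < l1 / l0 by rewrite ltr_pdivlMr // mul1r.
have E : forall (g : R -> R) p, g (l1 / l0 * p) = g (l1 * p / l0).
  by move=> g p; rewrite mulrAC.
split.
- apply: (@key R (alpha / beta) (l1 / l0) 1 0 f0) => //.
  + by move=> p cp p1; case: (ode0 p); first by rewrite cp.
  + move=> p cp p1; rewrite E => hlt.
    case: (ode0 p); first by rewrite cp.
    move=> _ eq.
    have hk : 0 < (l1 - l0) * p by rewrite mulr_gt0 //; lra.
    have hl : l0 * (f0 (l1 * p / l0) - f0 p) < 0 by rewrite pmulr_rlt0 // subr_lt0.
    nra.
- apply: (@key R (alpha / beta) (l1 / l0) 0 (- b) f1) => //; first lra.
  + by move=> p cp p1; case: (ode1 p); first by rewrite cp.
  + move=> p cp p1; rewrite E => hlt.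
    case: (ode1 p); first by rewrite cp.
    move=> _ eq.
    have hk : 0 < (l1 - l0) * p by rewrite mulr_gt0 //; lra.
    have hl : l0 * (f1 (l1 * p / l0) - f1 p) < 0 by rewrite pmulr_rlt0 // subr_lt0.
    nra.
Qed.
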